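(* When the greedy algorithm described in the context is run, after the deletion step at any time step $t$, the number of type-2 elements stored in QS is $O(\ell\log t)$.
   Context: A stream of elements from a totally ordered universe arrives one by one. Let $\ell=1/\varepsilon$ be an integer. The stream is partitioned into consecutive chunks of $\ell$ elements; time step $t$ is the arrival of the $t$-th chunk, and $t_0(x)$ is the time step in which $x$ arrives. The summary QS stores elements $e_1<\dots<e_s$ seen so far, each with integers $\mathrm{rmin}(e),\mathrm{rmax}(e)$; by convention $\mathrm{rmin}(e_0)=0$. An element $+\infty$, larger than all others, is inserted at the start of the stream and is always stored as $e_s$. Insert$(x)$: let $e_i$ be the smallest stored element with $e_i>x$; set $\mathrm{rmin}(x)=\mathrm{rmin}(e_{i-1})+1$, $\mathrm{rmax}(x)=\mathrm{rmax}(e_i)$, increase $\mathrm{rmin}(e_j),\mathrm{rmax}(e_j)$ by one for all $j\ge i$, and store $x$. Delete$(e_i)$: remove $e_i$, leaving all other values unchanged. Define $g_i=\mathrm{rmin}(e_i)-\mathrm{rmin}(e_{i-1})$ and $\Delta_i=\mathrm{rmax}(e_i)-\mathrm{rmin}(e_i)$. Band values: each element $x$ has an integer $\mathbf{v}(x)$: at time step $t_0(x)$, $\mathbf{v}(x)=0$; at each time step $t>t_0(x)$, if $t$ is a multiple of $2^{\mathbf{v}(x)}$ then $\mathbf{v}(x)$ is increased by one. Greedy algorithm: at each time step $t$: (i) run Insert on each element of the chunk; (ii) (deletion step) repeatedly run Delete$(e_i)$ for any arbitrarily chosen stored $e_i$ ($i<s$) with $\mathbf{v}(e_i)\le\mathbf{v}(e_{i+1})$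 and $g_i+g_{i+1}+\Delta_{i+1}\le t$, until none exists. After the deletion step at time $t$, a stored element $e_i$ ($i<s$) is called type-1 if $\mathbf{v}(e_i)>\mathbf{v}(e_{i+1})$, and type-2 if it is not type-1 (in which case $g_i+g_{i+1}+\Delta_{i+1}>t$). *)

(* Defs.v *)
From mathcomp Require Import all_boot all_order all_algebra.
Set Implicit Arguments. Unset Strict Implicit. Unset Printing Implicit Defensive.
Import Order.TTheory GRing.Theory Num.Theory.

Section Greedy.
Variables (d : Order.disp_t) (T : orderType d).

(* A stored entry: key (None = +infinity), rmin, rmax, arrival time step t0. *)
Record entry := Entry { key : option T; rmin : int; rmax : int; tarr : nat }.

Definition dflt_entry : entry := Entry None 0 0 0.

Definition kless (a : T) (k : option T) : bool :=
  if k is Some b then (a < b)%O else true.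

Fixpoint bandv (t0 t : nat) : nat :=
  match t with
  | 0 => 0
  | t'.+1 => if t'.+1 <= t0 then 0
             else let v := bandv t0 t' in
                  if (2 ^ v %| t'.+1) then v.+1 else v
  end.

Definition ent (s : seq entry) (j : nat) : entry := nth dflt_entry s j.

(* rmin of the predecessor of index j (0-based), with rmin(e_0) = 0 *)
Definition prev_rmin (s : seq entry) (j : nat) : int :=
  if j is j'.+1 then rmin (ent s j') else 0.

Definition bump_entry (e : entry) : entry :=
  Entry (key e) (rmin e + 1) (rmax e + 1) (tarr e).

Definition qs_insert (t : nat) (s : seq entry) (x : T) : seq entry :=
  let i := find (fun e => kless x (key e)) s in
  let nx := Entry (Some x) (prev_rmin s i + 1) (rmax (ent s i)) t in
  take i s ++ nx :: map bump_entry (drop i s).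

(* the t-th chunk (t >= 1) of the stream x with chunks of l elements *)
Definition chunk (l : nat) (x : nat -> T) (t : nat) : seq T :=
  [seq x ((t.-1) * l + k) | k <- iota 0 l].

Definition insert_chunk (l : nat) (x : nat -> T) (t : nat) (s : seq entry) :=
  foldl (qs_insert t) s (chunk l x t).

Definition vband (t : nat) (e : entry) : nat := bandv (tarr e) t.

(* 0-based index j corresponds to e_{j+1}; j.+1 < size s means i < s *)
Definition deletable (t : nat) (s : seq entry) (j : nat) : bool :=
  [&& j.+1 < size s,
      vband t (ent s j) <= vband t (ent s j.+1) &
      ((rmin (ent s j) - prev_rmin s j)
       + (rmin (ent s j.+1) - rmin (ent s j))
       + (rmax (ent s j.+1) - rmin (ent s j.+1))
       <= (t%:Z))%R].

Definition qs_delete (s : seq entry) (j : nat) : seq entry :=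
  take j s ++ drop j.+1 s.

Inductive del_steps (t : nat) : seq entry -> seq entry -> Prop :=
  | del_refl s : del_steps t s s
  | del_step s j s' : deletable t s j -> del_steps t (qs_delete s j) s' ->
                      del_steps t s s'.

Definition deletion_step (t : nat) (s s' : seq entry) : Prop :=
  del_steps t s s' /\ (forall j, ~~ deletable t s' j).

(* initial summary: only +infinity, inserted at the start (time 0),
   with rmin = rmin(e_0) + 1 = 1 and rmax = 1 *)
Definition qs_init : seq entry := [:: Entry None 1 1 0].

Definition greedy_run (l : nat) (x : nat -> T) (S : nat -> seq entry) : Prop :=
  S 0 = qs_init /\
  forall t, 0 < t -> deletion_step t (insert_chunk l x t (S t.-1)) (S t).

Definition num_type2 (t : nat) (s : seq entry) : nat :=
  count (fun j => vband t (ent s j) <= vband t (ent s j.+1)) (iota 0 (size s).-1).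

End Greedy.

(* Main.v *)
Require Import Defs.
From mathcomp Require Import all_boot all_order all_algebra zify.
Set Implicit Arguments. Unset Strict Implicit. Unset Printing Implicit Defensive.
Import Order.TTheory GRing.Theory Num.Theory.

Lemma bandv_le t0 t : t <= t0 -> bandv t0 t = 0.
Proof. by case: t => //= t ->. Qed.

Lemma bandvS t0 t : t0 <= t ->
  bandv t0 t.+1 = if 2 ^ bandv t0 t %| t.+1 then (bandv t0 t).+1 else bandv t0 t.
Proof. by move=> h /=; rewrite leqNgt ltnS h. Qed.

Lemma band_up t0 t : t0 <= t ->
  (t %/ 2 ^ bandv t0 t).+1 * 2 ^ bandv t0 t < t0 + 2 ^ (bandv t0 t).+1.
Proof.
elim: t => [|t IH].
  by rewrite leqn0 => /eqP ->.
rewrite leq_eqVlt => /orP [/eqP <-|].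
  by rewrite bandv_le // expn0 divn1 muln1 expn1; lia.
rewrite ltnS => h; move: (IH h); rewrite bandvS //.
set v := bandv t0 t; set D := 2 ^ v.
have D0 : 0 < D by rewrite expn_gt0.
have Hc := ltn_ceil t D0.
case: ifP => hd.
  have := leq_trunc_div t.+1 (2 ^ v.+1).
  rewrite !expnS -/D => A B.
  rewrite mulSn. lia.
rewrite divnS // hd add0n => B; exact: B.
Qed.

Lemma band_age t0 t : t0 <= t -> t - t0 < 2 ^ (bandv t0 t).+1.
Proof.
move=> h; have := band_up h; have := ltn_ceil t (expn_gt0 2 (bandv t0 t)).
lia.
Qed.

Lemma band_low_aux t0 t : t0 < t ->
  exists w, bandv t0 t = w.+1 /\ t0 + 2 ^ w <= t %/ 2 ^ w * 2 ^ w.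
Proof.
elim: t => [//|t IH].
rewrite ltnS leq_eqVlt => /orP [/eqP <-|h].
  exists 0; rewrite bandvS // bandv_le // expn0 dvd1n divn1 muln1; split => //.
  lia.
have [w [hw hb]] := IH h.
rewrite bandvS ?(ltnW h) // hw.
set D := 2 ^ w.
have D0 : 0 < D by rewrite expn_gt0.
case: ifP => hd.
  exists w.+1; split => //.
  rewrite divnK //.
  move: hd; rewrite expnS -/D => /dvdnP [k hk].
  have hq : t %/ D < 2 * k.
    rewrite -(ltn_pmul2r D0).
    have := leq_trunc_div t D; nia.
  have : (t %/ D).+1 * D <= 2 * k * D by rewrite leq_pmul2r.
  move=> H1; move: hb H1; rewrite -/D mulSn; clearbody D; nia.
exists w; split => //.
apply: leq_trans hb _; rewrite leq_pmul2r //; exact: leq_div2r.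
Qed.

Lemma band_low t0 t : 2 ^ bandv t0 t <= 2 * (t - t0) + 1.
Proof.
case: (leqP t t0) => h.
  by rewrite bandv_le // expn0 addn1.
have [w [-> hb]] := band_low_aux h.
have := leq_trunc_div t (2 ^ w).
rewrite expnS; move: hb; set D := 2 ^ w; clearbody D; lia.
Qed.

Lemma band_phi t0 t u : t0 <= t ->
  (bandv t0 t.+1 < u) =
  (bandv t0 t < (if u is u1.+1 then (if 2 ^ u1 %| t.+1 then u1 else u) else 0)).
Proof.
move=> h; rewrite bandvS //.
set b := bandv t0 t.
case: u => [|u]; first by case: ifP.
case: (ltngtP b u) => hbu.
- case: ifP; case: ifP; lia.
- case: ifP; case: ifP; lia.
- rewrite hbu; case: ifP => //; lia.
Qed.

Section Inv.
Variables (d : Order.disp_t) (T : orderType d).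
Notation entry := (entry T).
Notation dflt := (dflt_entry T).

Fixpoint wsum (p : nat -> bool) (r : int) (s : seq entry) : int :=
  if s is e :: s' then ((if p (tarr e) then rmin e - r else 0) + wsum p (rmin e) s')%R
  else 0%R.

Fixpoint gnn (r : int) (s : seq entry) : bool :=
  if s is e :: s' then ((r <= rmin e)%R && gnn (rmin e) s') else true.

Fixpoint gdok (t : nat) (r : int) (s : seq entry) : bool :=
  if s is e :: s' then ((rmax e - r <= t%:Z)%R && gdok t (rmin e) s') else true.

Definition lastr (r : int) (s : seq entry) := last r (map (@rmin _ T) s).

Lemma wsum_cat p r s1 s2 :
  wsum p r (s1 ++ s2) = (wsum p r s1 + wsum p (lastr r s1) s2)%R.
Proof. by elim: s1 r => [|e s1 IH] r /=; rewrite ?add0r // IH addrA. Qed.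

Lemma gnn_cat r s1 s2 : gnn r (s1 ++ s2) = gnn r s1 && gnn (lastr r s1) s2.
Proof. by elim: s1 r => [|e s1 IH] r //=; rewrite IH andbA. Qed.

Lemma gdok_cat t r s1 s2 : gdok t r (s1 ++ s2) = gdok t r s1 && gdok t (lastr r s1) s2.
Proof. by elim: s1 r => [|e s1 IH] r //=; rewrite IH andbA. Qed.

Lemma wsum_bump p r s : wsum p (r + 1) (map (@bump_entry _ T) s) = wsum p r s.
Proof.
elim: s r => [|e s IH] r //=; rewrite IH; congr (_ + _)%R.
by case: ifP => //; rewrite opprD addrACA subrr addr0.
Qed.

Lemma gnn_bump r s : gnn (r + 1) (map (@bump_entry _ T) s) = gnn r s.
Proof. by elim: s r => [|e s IH] r //=; rewrite IH lerD2r. Qed.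

Lemma gdok_bump t r s : gdok t (r + 1) (map (@bump_entry _ T) s) = gdok t r s.
Proof.
by elim: s r => [|e s IH] r //=; rewrite IH opprD addrACA subrr addr0.
Qed.

Lemma gnn_last r s : gnn r s -> (r <= lastr r s)%R.
Proof.
elim: s r => [|e s IH] r //= /andP [h1 h2].
exact: le_trans h1 (IH _ h2).
Qed.

Lemma gdok_mono t t' r s : t <= t' -> gdok t r s -> gdok t' r s.
Proof.
move=> htt; elim: s r => [|e s IH] r //= /andP [h1 h2].
rewrite IH // andbT; apply: le_trans h1 _; by rewrite lez_nat.
Qed.

Lemma wsum_eq p q r s t :
  all (fun e => tarr e <= t) s -> (forall x, x <= t -> p x = q x) ->
  wsum p r s = wsum q r s.
Proof.
move=> ha hpq; elim: s r ha => [|e s IH] r //= /andP [h1 h2].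
by rewrite hpq // IH.
Qed.

Lemma lastr_take r s i : i <= size s ->
  lastr r (take i s) = if i is i'.+1 then rmin (nth dflt s i') else r.
Proof.
rewrite /lastr; elim: s i r => [|e s IH] [|i] r //= hi.
rewrite IH //; by case: i hi.
Qed.

Lemma prev_rmin_take s i : i <= size s -> prev_rmin s i = lastr 0 (take i s).
Proof. by move=> h; rewrite lastr_take //; case: i h. Qed.

End Inv.

Section Ins.
Variables (d : Order.disp_t) (T : orderType d).
Notation entry := (entry T).
Notation dflt := (dflt_entry T).

Definition dok (e : entry) := (rmax e - rmin e <= (tarr e)%:Z)%R.
Definition tok t (e : entry) := tarr e <= t.

Definition InsInv (l t m : nat) (s : seq entry) :=
  [/\ gnn 0 s, gdok t 0 s, all dok s, all (tok t) s &
   forall u, (wsum (fun x => (bandv x t < u)%N) 0 s <=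
      (l * count (fun x => bandv x t < u) (iota 0 t) + m * (0 < u))%N%:Z)%R].

Lemma ent_head (s : seq entry) i : ent s i = head dflt (drop i s).
Proof. by rewrite /ent -nth0 nth_drop addn0. Qed.

Lemma head_gdok t r (s : seq entry) : (0 <= r)%R -> gdok t r s ->
  (rmax (head dflt s) - r <= t%:Z)%R.
Proof.
case: s => [|e s'] /= hr; last by case/andP.
move=> _; rewrite sub0r; apply: le_trans (_ : 0 <= _)%R => //; by rewrite oppr_le0.
Qed.

Lemma ins_step l t m s x : InsInv l t m s -> InsInv l t m.+1 (qs_insert t s x).
Proof.
rewrite /qs_insert; set i := find _ s.
have hi : i <= size s by apply: find_size.
rewrite (prev_rmin_take hi) ent_head.
rewrite -{1}(cat_take_drop i s).
set s1 := take i s; set s2 := drop i s.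
set r1 := lastr 0 s1.
case=> hg hd ha ht hw.
have hr1 : (0 <= r1)%R by apply: gnn_last; move: hg; rewrite gnn_cat => /andP [].
have hgd2 : gdok t r1 s2 by move: hd; rewrite gdok_cat => /andP [].
have hhd : (rmax (head dflt s2) - r1 <= t%:Z)%R.
  exact: head_gdok.
split.
- move: hg; rewrite !gnn_cat /= gnn_bump -/r1 => /andP [-> ->].
  by rewrite lerDl.
- move: hd; rewrite !gdok_cat /= gdok_bump -/r1 => /andP [-> ->].
  by rewrite hhd.
- move: ha; rewrite !all_cat /= => /andP [-> ha2] /=.
  apply/andP; split.
    rewrite /dok /=; move: hhd; lia.
  by rewrite all_map; apply: sub_all ha2 => e; rewrite /dok /= opprD addrACA subrr addr0.
- move: ht; rewrite !all_cat /= => /andP [-> ht2] /=.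
  by rewrite /tok leqnn /= all_map.
move=> u; have := hw u.
rewrite !wsum_cat /= wsum_bump -/r1 bandv_le //.
case: u => [|u] /=; lia.
Qed.

Lemma ins_fold l t m s xs : InsInv l t m s ->
  InsInv l t (m + size xs) (foldl (qs_insert t) s xs).
Proof.
elim: xs m s => [|x xs IH] m s /=; first by rewrite addn0.
by move=> h; rewrite -addSnnS; apply: IH; apply: ins_step.
Qed.

End Ins.

Section Del.
Variables (d : Order.disp_t) (T : orderType d).
Notation entry := (entry T).
Notation dflt := (dflt_entry T).

Definition MidInv (l t : nat) (s : seq entry) :=
  [/\ gnn 0 s, gdok t 0 s, all (@dok _ T) s, all (tok t) s &
   forall u, (wsum (fun x => (bandv x t < u)%N) 0 s <=
      (l * count (fun x => bandv x t < u) (iota 0 t.+1))%N%:Z)%R].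

Lemma ins_mid l t s : InsInv l t l s -> MidInv l t s.
Proof.
case=> h1 h2 h3 h4 h5; split => // u; have := h5 u.
rewrite (_ : iota 0 t.+1 = iota 0 t ++ [:: t]); last by rewrite -addn1 iotaD.
rewrite count_cat /= bandv_le // addn0 mulnDr.
by case: u.
Qed.

Lemma del_decomp (s : seq entry) j : j.+1 < size s ->
  [/\ s = take j s ++ ent s j :: ent s j.+1 :: drop j.+2 s,
      qs_delete s j = take j s ++ ent s j.+1 :: drop j.+2 s &
      prev_rmin s j = lastr 0 (take j s)].
Proof.
move=> h.
have h' : j < size s by apply: ltnW.
have e1 := drop_nth dflt h'; have e2 := drop_nth dflt h.
split.
- by rewrite -{1}(cat_take_drop j s) e1 e2.
- by rewrite /qs_delete e2.
- by rewrite prev_rmin_take // ltnW.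
Qed.

Lemma del_step l t s j : MidInv l t s -> deletable t s j -> MidInv l t (qs_delete s j).
Proof.
move=> hm /and3P [hj hv hdel].
have [es ed ep] := del_decomp hj.
rewrite ep in hdel; move: hm hv hdel; rewrite ed /vband; move: es.
set s1 := take j s; set a := ent s j; set b := ent s j.+1; set s2 := drop j.+2 s.
clearbody s1 a b s2 => es; subst s.
set r1 := lastr 0 s1.
case=> hg hd ha ht hw hv hdel.
split.
- move: hg; rewrite !gnn_cat /= -/r1 => /andP [-> /and3P [h1 h2 ->]].
  by rewrite (le_trans h1 h2).
- move: hd; rewrite !gdok_cat /= -/r1 => /andP [-> /and3P [h1 h2 ->]].
  rewrite andbT; move: hdel; lia.
- by move: ha; rewrite !all_cat /= => /andP [-> /and3P [_ -> ->]].
- by move: ht; rewrite !all_cat /= => /andP [-> /and3P [_ -> ->]].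
move=> u; apply: le_trans (hw u).
rewrite !wsum_cat /= -/r1.
move: hg; rewrite gnn_cat /= -/r1 => /andP [_ /and3P [h1 h2 _]].
rewrite lerD2l !addrA lerD2r.
case: ifP => hb.
  have -> : (bandv (tarr a) t < u)%N by apply: leq_ltn_trans hv hb.
  lia.
rewrite addr0; case: ifP => _; last by [].
by rewrite subr_ge0.
Qed.

Lemma del_steps_mid l t s s' : del_steps t s s' -> MidInv l t s -> MidInv l t s'.
Proof.
elim=> [//|s0 j s0' hdel _ IH] hm.
apply: IH; exact: del_step hm hdel.
Qed.

Lemma mid_ins l t s : MidInv l t s -> InsInv l t.+1 0 s.
Proof.
case=> h1 h2 h3 h4 h5; split => //.
- by apply: gdok_mono h2.
- by apply: sub_all h4 => e; rewrite /tok => h; apply: leqW.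
move=> u; rewrite mul0n addn0.
set u' := (if u is u1.+1 then (if 2 ^ u1 %| t.+1 then u1 else u) else 0).
rewrite (@wsum_eq _ _ _ (fun x => bandv x t < u') _ _ t h4); last first.
  by move=> x hx; apply: band_phi.
rewrite (@eq_in_count _ _ (fun x => bandv x t < u')); first exact: h5.
by move=> x; rewrite mem_iota add0n ltnS => /andP [_ hx]; apply: band_phi.
Qed.

End Del.

Section Run.
Variables (d : Order.disp_t) (T : orderType d).

Lemma init_inv l : 0 < l -> InsInv l 1 0 (qs_init T).
Proof.
move=> hl; split => //= u.
rewrite /=.
case: u => [|[|u]] //=; lia.
Qed.

Lemma run_inv l (x : nat -> T) (S : nat -> seq (entry T)) : 0 < l -> greedy_run l x S -> forall t, MidInv l t.+1 (S t.+1).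
Proof.
move=> hl [h0 hS].
have step : forall t, InsInv l t.+1 0 (S t) -> MidInv l t.+1 (S t.+1).
  move=> t hi; have [hd _] := hS t.+1 isT.
  apply: (del_steps_mid hd); apply: ins_mid.
  have := ins_fold (chunk l x t.+1) hi.
  by rewrite /chunk size_map size_iota add0n.
elim=> [|t IH].
  by apply: step; rewrite h0; apply: init_inv.
by apply: step; apply: mid_ins.
Qed.

End Run.

Lemma iota0E m : iota 0 m = index_iota 0 m.
Proof. by rewrite /index_iota subn0. Qed.

Lemma count_sumz (I : Type) (a : pred I) (r : seq I) (c : int) :
  ((count a r)%:Z * c = \sum_(j <- r) (if a j then c else 0))%R.
Proof.
elim: r => [|j r IH]; first by rewrite big_nil mul0r.
rewrite big_cons /= PoszD mulrDl IH; congr (_ + _)%R.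
by case: (a j); rewrite ?mul1r ?mul0r.
Qed.

Lemma sum_ind_eq (b : bool) (k M : nat) : \sum_(v < M) (b && (k == v :> nat)) = b && (k < M).
Proof.
case: b; last by rewrite big1.
elim: M => [|M IH]; first by rewrite big_ord0.
rewrite big_ord_recr /= IH /=.
case: eqP => [->|hne]; first by rewrite ltnn ltnSn.
by rewrite addn0 [in RHS]ltnS [in RHS]leq_eqVlt; move/eqP/negbTE: hne => ->.
Qed.

Lemma count_split (I : Type) (P : pred I) (f : I -> nat) M (r : seq I) :
  (forall j, f j < M) ->
  count P r = \sum_(v < M) count (fun j => P j && (f j == v :> nat)) r.
Proof.
move=> hf; elim: r => [|j r IH] /=; first by rewrite big1.
by rewrite big_split /= sum_ind_eq hf andbT IH.
Qed.

Lemma count_ge k m : count (fun x => k <= x) (iota 0 m) = m - k.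
Proof.
elim: m => [//|m IH].
rewrite -addn1 iotaD count_cat IH /= add0n addn0.
case: (leqP k m) => h; lia.
Qed.

Lemma count_band_le t u : count (fun x => bandv x t < u) (iota 0 t.+1) <= 2 ^ u.
Proof.
apply: (@leq_trans (count (fun x => t.+1 - 2 ^ u <= x) (iota 0 t.+1))).
  apply: sub_count => x /= hx.
  case: (leqP x t) => hxt; last by lia.
  have := band_age hxt.
  have : 2 ^ (bandv x t).+1 <= 2 ^ u by rewrite leq_exp2l.
  lia.
rewrite count_ge; lia.
Qed.

Section Final.
Variables (d : Order.disp_t) (T : orderType d).
Notation entry := (entry T).
Notation dflt := (dflt_entry T).

Definition pr (r : int) (s : seq entry) j :=
  if j is j'.+1 then rmin (nth dflt s j') else r.

Lemma wsum_idx p r (s : seq entry) :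
  wsum p r s = (\sum_(0 <= j < size s)
     (if p (tarr (nth dflt s j)) then rmin (nth dflt s j) - pr r s j else 0))%R.
Proof.
elim: s r => [|e s IH] r /=; first by rewrite big_nil.
rewrite big_nat_recl // IH; congr (_ + _)%R.
by apply: eq_bigr => [[|j]] _.
Qed.

Lemma gnn_idx r (s : seq entry) j : gnn r s -> j < size s ->
  (pr r s j <= rmin (nth dflt s j))%R.
Proof.
elim: s r j => [|e s IH] r j //= /andP [h1 h2].
case: j => [|j] hj //=.
have := IH _ j h2 hj; by case: j hj.
Qed.

End Final.

Lemma sum_drop_last (H : nat -> int) n : (forall k, k < n -> (0 <= H k)%R) ->
  (\sum_(0 <= j < n.-1) H j <= \sum_(0 <= j < n) H j)%R.
Proof.
case: n => [|n] hH /=; first by rewrite big_geq.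
by rewrite big_nat_recr //= lerDl hH.
Qed.

Lemma sum_shift (H : nat -> int) n : (forall k, k < n -> (0 <= H k)%R) ->
  (\sum_(0 <= j < n.-1) H j.+1 <= \sum_(0 <= j < n) H j)%R.
Proof.
case: n => [|n] hH /=; first by rewrite !big_geq.
by rewrite big_nat_recl //= lerDr hH.
Qed.

Section Final2.
Variables (d : Order.disp_t) (T : orderType d).
Notation entry := (entry T).
Notation dflt := (dflt_entry T).

Lemma final_bound l t (s : seq entry) : 0 < l -> 2 <= t -> MidInv l t s ->
  (forall j, ~~ deletable t s j) -> num_type2 t s <= 24 * l * trunc_log 2 t.
Proof.
move=> hl ht2 [hg hd ha ht hw] hnd.
pose n := size s.
pose b k := vband t (ent s k).
pose g k := (rmin (ent s k) - prev_rmin s k)%R.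
pose L := trunc_log 2 t.
have hL1 : 1 <= L by apply: trunc_log_max.
have htL : t < 2 ^ L.+1 by apply: trunc_log_ltn.
have gpos : forall k, k < n -> (0 <= g k)%R.
  by move=> k hk; rewrite /g subr_ge0; exact: (gnn_idx hg hk).
have hb : forall k, b k < L.+2.
  move=> k; rewrite -(@ltn_exp2l 2) //.
  have := band_low (tarr (ent s k)) t; rewrite /b /vband.
  have : 2 ^ L.+2 = 2 * 2 ^ L.+1 by rewrite expnS.
  lia.
have key : forall j, j.+1 < n -> b j <= b j.+1 ->
    ((2 ^ b j.+1)%:Z <= 2 * (g j + g j.+1))%R.
  move=> j hj hbj.
  have hn := hnd j; rewrite /deletable hj hbj /= -ltNge in hn.
  have hda : dok (ent s j.+1) by apply: (all_nthP dflt ha).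
  have hta : tok t (ent s j.+1) by apply: (all_nthP dflt ht).
  have := band_low (tarr (ent s j.+1)) t.
  move: hn hda hta; rewrite /dok /tok /g /b /vband /=.
  set X := 2 ^ _; clearbody X.
  lia.
pose H v k := if (b k <= v)%N then g k else 0%R.
have Hpos : forall v k, k < n -> (0 <= H v k)%R.
  by move=> v k hk; rewrite /H; case: ifP => // _; apply: gpos.
have Kv : forall v, count (fun j => (b j <= b j.+1) && (b j.+1 == v)) (iota 0 n.-1) <= 8 * l.
  move=> v.
  have X0 : 0 < 2 ^ v by rewrite expn_gt0.
  rewrite -(leq_pmul2r X0) -lez_nat PoszM count_sumz.
  apply: (@le_trans _ _ (\sum_(0 <= j < n.-1) (2 * (H v j + H v j.+1)))%R).
    rewrite iota0E; apply: ler_sum_nat => j /andP [_ hj].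
    have hj1 : j.+1 < n by move: hj; case: (n) => //= m; rewrite ltnS.
    case: ifP => [/andP [hbj /eqP hv]|_].
      rewrite /H -hv leqnn hbj; exact: key.
    by rewrite mulr_ge0 // addr_ge0 // Hpos // ltnW.
  rewrite -mulr_sumr big_split /=.
  have h1 := sum_drop_last (Hpos v).
  have h2 := sum_shift (Hpos v).
  have h3 : (\sum_(0 <= j < n) H v j = wsum (fun x => (bandv x t < v.+1)%N) 0 s)%R.
    rewrite wsum_idx; apply: eq_bigr => k _; by rewrite /H /b /g ltnS.
  have h4 := hw v.+1.
  have h5 := count_band_le t v.+1.
  have h6 : (l * count (fun x => bandv x t < v.+1) (iota 0 t.+1) <= l * 2 ^ v.+1) by rewrite leq_mul2l h5 orbT.
  move: h1 h2 h3 h4 h6; rewrite expnS.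
  set A := (\sum_(0 <= j < n.-1) H v j)%R; set B := (\sum_(0 <= j < n.-1) H v j.+1)%R.
  set C := (\sum_(0 <= j < n) H v j)%R; set W := wsum _ _ _; set K := count _ _.
  set X := 2 ^ v; clearbody A B C W K X.
  nia.
rewrite /num_type2 (@count_split _ _ (fun j => b j.+1) L.+2); last by move=> j; apply: hb.
apply: (@leq_trans (\sum_(v < L.+2) 8 * l)).
  by apply: leq_sum => v _; apply: Kv.
rewrite sum_nat_const card_ord.
nia.
Qed.

End Final2.

Theorem mainTheorem5 :
  exists C : nat,
  forall (d : Order.disp_t) (T : orderType d) (l : nat) (x : nat -> T)
         (S : nat -> seq (entry T)),
    0 < l -> injective x -> greedy_run l x S ->
    forall t : nat, 2 <= t -> num_type2 t (S t) <= C * l * trunc_log 2 t.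
Proof.
exists 24 => d T l x S hl _ hrun [|t] // ht.
have hm := run_inv hl hrun t.
have [_ hS] := hrun.
have [_ hnd] := hS t.+1 isT.
exact: final_bound hl ht hm hnd.
Qed.
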